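(* Let $(S,K,I)$ be a balanced split graph with $|I|\ge2$ such that $\Phi(S)$ is complete. If $x$ is an inactive vertex of $S$, then $x$ is universal in $S$.
   Context: All graphs are finite and simple. A split graph is a graph $S$ whose vertex set is a disjoint union $V(S)=K\,\dot\cup\,I$ with $K$ a clique and $I$ an independent set; $(K,I)$ is called a bipartition of $S$, and $(S,K,I)$ denotes $S$ together with this fixed bipartition. A 2-switch in a graph $G$ is performed on four distinct vertices $a,b,c,d$ with $ab,cd\in E(G)$ and $ac,bd\notin E(G)$: it deletes $ab,cd$ and adds $ac,bd$; $a,b,c,d$ are said to participate in it. A vertex is active in $G$ if it participates in some 2-switch on $G$, otherwise inactive. A vertex is universal if it is adjacent to all other vertices. For a split graph $(S,K,I)$ and distinct $u,v\in I$, $\sigma_{uv}(S)$ is the number of induced subgraphs of $S$ isomorphic to $P_4$ containing both $u$ and $v$. The factor graph $\Phi(S)$ is the loopless multigraph with vertex set $I$ having exactly $\sigma_{uv}(S)$ parallel edges between $u$ and $v$. Graph notions (connected, complete, etc.) applied to $\Phi(S)$ refer to its underlying simple graph, in which $u\sim v$ iff $\sigma_{uv}(S)\ge1$. A vertex $w$ of $(S,K,I)$ is swing if $N_S(w)=K\setminus\{w\}$. $(S,K,I)$ is balanced if $|K|=\omega(S)$ and $|I|=\alpha(S)$; it is known that $S$ is balanced iff it has no swing vertex. *)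

(* Defs.v *)
From mathcomp Require Import all_boot.
Set Implicit Arguments. Unset Strict Implicit. Unset Printing Implicit Defensive.

Section Graphs.
Variables (T : finType) (e : rel T).

Definition simple_graph : Prop := symmetric e /\ irreflexive e.

Definition is_clique (A : {set T}) : bool :=
  [forall x in A, forall y in A, (x != y) ==> e x y].

Definition is_indep (A : {set T}) : bool :=
  [forall x in A, forall y in A, ~~ e x y].

Definition omega : nat := \max_(A : {set T} | is_clique A) #|A|.
Definition alpha : nat := \max_(A : {set T} | is_indep A) #|A|.

Definition split_bipartition (K I : {set T}) : Prop :=
  [/\ K :&: I = set0, K :|: I = setT, is_clique K & is_indep I].

Definition balanced (K I : {set T}) : Prop :=
  #|K| = omega /\ #|I| = alpha.

Definition induces_P4 (A : {set T}) : bool :=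
  [exists a : T, exists b : T, exists c : T, exists d : T,
    [&& A == [set a; b; c; d], uniq [:: a; b; c; d],
        [&& e a b, e b c & e c d] & [&& ~~ e a c, ~~ e b d & ~~ e a d]]].

Definition sigma (u v : T) : nat :=
  #|[set A : {set T} | induces_P4 A && (u \in A) && (v \in A)]|.

(* Phi(S) complete: its underlying simple graph on I is complete *)
Definition factor_graph_complete (I : {set T}) : Prop :=
  forall u v, u \in I -> v \in I -> u != v -> 0 < sigma u v.

(* x participates in some 2-switch *)
Definition active (x : T) : Prop :=
  exists a b c d : T,
    [/\ uniq [:: a; b; c; d], e a b && e c d, ~~ e a c && ~~ e b d
      & x \in [:: a; b; c; d]].

Definition universal (x : T) : Prop := forall y, y != x -> e x y.

End Graphs.

(* Main.v *)
Require Import Defs.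
From mathcomp Require Import all_boot.

Lemma sigma_P4 (T : finType) (e : rel T) (u v : T) : 0 < sigma e u v ->
  exists a b c d, [/\ uniq [:: a; b; c; d], [&& e a b, e b c & e c d],
     [&& ~~ e a c, ~~ e b d & ~~ e a d], u \in [set a; b; c; d] & v \in [set a; b; c; d]].
Proof.
rewrite /sigma card_gt0 => /set0Pn [A]; rewrite inE => /andP [/andP [HP Hu] Hv].
move/existsP: HP => [a /existsP [b /existsP [c /existsP [d]]]].
case/and4P => /eqP HA Hun H1 H2; exists a, b, c, d; split => //; by rewrite -HA.
Qed.
Arguments sigma_P4 {T e u v}.

Theorem lemma4p1 (T : finType) (e : rel T) (K I : {set T}) :
  simple_graph e ->
  split_bipartition e K I ->
  balanced e K I ->
  1 < #|I| ->
  factor_graph_complete e I ->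
  forall x : T, ~ active e x -> universal e x.
Proof.
move=> [esym eirr] [KI KuI cK iI] [_ Hal] HI2 Hphi x Hx.
have KorI : forall z, (z \in K) || (z \in I).
  by move=> z; rewrite -in_setU KuI inE.
have nKI : forall z, z \in K -> z \in I -> False.
  move=> z zK zI; have : z \in K :&: I by rewrite inE zK zI.
  by rewrite KI inE.
have cl : forall z1 z2, z1 \in K -> z2 \in K -> z1 != z2 -> e z1 z2.
  move=> z1 z2 h1 h2 hn; move/forallP: cK => /(_ z1); rewrite h1 /=.
  by move/forallP => /(_ z2); rewrite h2 /= hn.
have ind : forall z1 z2, z1 \in I -> z2 \in I -> ~~ e z1 z2.
  move=> z1 z2 h1 h2; move/forallP: iI => /(_ z1); rewrite h1 /=.
  by move/forallP => /(_ z2); rewrite h2.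
have P4str : forall a b c d, uniq [:: a; b; c; d] -> [&& e a b, e b c & e c d] ->
     [&& ~~ e a c, ~~ e b d & ~~ e a d] ->
     [/\ a \in I, b \in K, c \in K & d \in I].
  move=> a b c d Hu /and3P [ab bc cd] /and3P [ac bd ad].
  move: Hu; rewrite /= !inE !negb_or => /andP [/and3P [nab nac nad]] /andP [/andP [nbc nbd] _].
  have bK : b \in K.
    case/orP: (KorI b) => // bI.
    have aK : a \in K by case/orP: (KorI a) => // aI; move: (ind _ _ aI bI); rewrite ab.
    have cK' : c \in K by case/orP: (KorI c) => // cI; move: (ind _ _ bI cI); rewrite bc.
    by move: ac; rewrite (cl _ _ aK cK' nac).
  have cK' : c \in K.
    case/orP: (KorI c) => // cI.
    have bK' : b \in K by [].
    have dK : d \in K by case/orP: (KorI d) => // dI; move: (ind _ _ cI dI); rewrite cd.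
    by move: bd; rewrite (cl _ _ bK dK nbd).
  split => //.
    case/orP: (KorI a) => // aK; by move: ac; rewrite (cl _ _ aK cK' nac).
  case/orP: (KorI d) => // dK; by move: bd; rewrite (cl _ _ bK dK nbd).
move=> u Hux; apply/negPn/negP => nxu.
case/orP: (KorI x) => [xK|xI].
-
  have uI : u \in I.
    case/orP: (KorI u) => // uK; move: nxu; by rewrite (cl _ _ xK uK) // eq_sym.
  have : [exists w in I, e x w].
    apply: contraT => /exists_inPn Hn.
    have Hind : is_indep e (x |: I).
      apply/forallP => z1; apply/implyP; rewrite in_setU1 => /orP [/eqP->|z1I];
      apply/forallP => z2; apply/implyP; rewrite in_setU1 => /orP [/eqP->|z2I].
      + by rewrite eirr.
      + exact: Hn.
      + by rewrite esym Hn.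
      + exact: ind.
    have : #|x |: I| <= alpha e by exact: (@leq_bigmax_cond _ (fun B : {set T} => is_indep e B) (fun B => #|B|) _ Hind).
    rewrite cardsU1 -Hal; have -> : x \notin I by apply/negP; exact: nKI.
    by rewrite add1n ltnn.
  case/exists_inP => w wI xw.
  have uw : u != w by apply/eqP => uw; move: nxu; rewrite uw xw.
  have [y uy nwy] : exists2 y, e u y & ~~ e w y.
    have [a [b [c [d [Hu Hp Hn Hu' Hw']]]]] := sigma_P4 (Hphi _ _ uI wI uw).
    have [aI bK cK' dI] := P4str _ _ _ _ Hu Hp Hn.
    move/and3P: Hp => [ab bc cd]; move/and3P: Hn => [ac bd ad].
    move: Hu' Hw'; rewrite !inE -!orbA.
    case/or4P => /eqP Eu; subst u.
    + case/or4P => /eqP Ew; subst w.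
      * by rewrite eqxx in uw.
      * by exfalso; apply: (nKI _ bK wI).
      * by exfalso; apply: (nKI _ cK' wI).
      * by exists b; rewrite // esym.
    + by exfalso; apply: (nKI _ bK uI).
    + by exfalso; apply: (nKI _ cK' uI).
    + case/or4P => /eqP Ew; subst w.
      * by exists c; rewrite // esym.
      * by exfalso; apply: (nKI _ bK wI).
      * by exfalso; apply: (nKI _ cK' wI).
      * by rewrite eqxx in uw.
  apply: Hx; exists u, y, x, w; split.
  + have yK : y \in K by case/orP: (KorI y) => // yI; move: (ind _ _ uI yI); rewrite uy.
    rewrite /= !inE !negb_or.
    have -> : u != y by apply/eqP => E; move: uy; rewrite E eirr.
    have -> : u != x by apply/eqP => E; apply: (nKI x); rewrite // -E.
    have -> : y != x by apply/eqP => E; move: nxu; rewrite -E esym uy.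
    have -> : y != w by apply/eqP => E; apply: (nKI w); rewrite // -E.
    have -> : x != w by apply/eqP => E; move: xw; rewrite E eirr.
    by rewrite uw.
  + by rewrite uy xw.
  + by rewrite (esym u x) (esym y w) nxu nwy.
  + by rewrite !inE eqxx !orbT.
-
  have [v vI vx] : exists2 v, v \in I & v != x.
    move/card_gt1P: HI2 => [p [q [pI qI pq]]].
    case: (eqVneq p x) => [Epx|px]; last by exists p.
    by exists q => //; rewrite -Epx eq_sym.
  have eq_sym_neq : v != x -> x != v by rewrite eq_sym.
  have [a [b [c [d [Hu Hp Hn Hx' _]]]]] := sigma_P4 (Hphi _ _ xI vI (eq_sym_neq vx)).
  apply: Hx; exists a, b, c, d; split => //.
  + by case/and3P: Hp => -> _ ->.
  + by case/and3P: Hn => -> -> _.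
  + by move: Hx'; rewrite !inE -!orbA.
Qed.
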